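(* Let $M_\bullet=(M_n,\mathrm{tr}_n,e_{n+1})_{n\ge0}$ be a Markov tower of modulus $d$, and fix integers $j\ge0$, $k\ge1$. For $i\ge0$ and $\ell\ge1$ define $f^{i+\ell}_i:=d^{\ell(\ell-1)}(e_{i+\ell}e_{i+\ell-1}\cdots e_{i+1})(e_{i+\ell+1}e_{i+\ell}\cdots e_{i+2})\cdots(e_{i+2\ell-1}e_{i+2\ell-2}\cdots e_{i+\ell})\in M_{i+2\ell}$, and for $n\ge1$ set $g_n:=f^{j+nk}_{j+(n-1)k}\in M_{j+(n+1)k}$. Then $M_{j+k\bullet}:=(M_{j+nk},\mathrm{tr}_{j+nk},g_{n+1})_{n\ge0}$ is a Markov tower of modulus $d^k$ (i.e. the $g_n$ are projections satisfying the Temperley–Lieb–Jones relations with $d^{-2}$ replaced by $d^{-2k}$, $g_n$ implements the trace-preserving conditional expectation $M_{j+nk}\to M_{j+(n-1)k}$, this expectation applied from $M_{j+(n+1)k}$ sends $g_n$ to $d^{-2k}$, and $M_{j+(n+1)k}g_n=M_{j+nk}g_n$).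
   Context: A Markov tower $M_\bullet=(M_n,\mathrm{tr}_n,e_{n+1})_{n\ge0}$ is a sequence of finite-dimensional von Neumann algebras with unital inclusions $M_n\subset M_{n+1}$, faithful tracial states with $\mathrm{tr}_{n+1}|_{M_n}=\mathrm{tr}_n$, and projections $e_n\in M_{n+1}$ ($n\ge1$) such that: (M1) $e_i=e_i^2=e_i^*$, $e_ie_j=e_je_i$ for $|i-j|>1$, and $e_ie_{i\pm1}e_i=d^{-2}e_i$ for a fixed $d>0$ (the modulus); (M2) $e_nxe_n=E_n(x)e_n$ for $x\in M_n$, where $E_n:M_n\to M_{n-1}$ is the trace-preserving conditional expectation; (M3) $E_{n+1}(e_n)=d^{-2}$; (M4) $M_{n+1}e_n=M_ne_n$. *)

(* Defs.v *)
From HB Require Import structures.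
From mathcomp Require Import all_boot all_order all_algebra.
Set Implicit Arguments. Unset Strict Implicit. Unset Printing Implicit Defensive.
Import Order.TTheory GRing.Theory Num.Theory.
Local Open Scope ring_scope.

(* Ambient setting: a unital algebra [A] over a numerically closed field [C]
   (the scalar field; for the paper C = complex numbers), containing the
   whole tower M_0 ⊂ M_1 ⊂ ... as unital *-subalgebras (inclusions are
   literal set inclusions inside the inductive-limit algebra A). *)

Definition star_algebra (C : numClosedFieldType) (A : algType C)
  (star : A -> A) : Prop :=
  [/\ forall x, star (star x) = x,
      forall x y, star (x + y) = star x + star y,
      forall (a : C) x, star (a *: x) = Num.conj a *: star x
    & forall x y, star (x * y) = star y * star x].

Definition fd_star_subalgebra (C : numClosedFieldType) (A : algType C)
  (star : A -> A) (S : A -> Prop) : Prop :=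
  [/\ S 1,
      forall x y, S x -> S y -> S (x + y),
      forall (a : C) x, S x -> S (a *: x),
      forall x y, S x -> S y -> S (x * y)
    & forall x, S x -> S (star x)] /\
    (exists s : seq A, forall x,
        S x <-> exists c : 'I_(size s) -> C, x = \sum_(i < size s) c i *: s`_i).

Definition faithful_tracial_state (C : numClosedFieldType) (A : algType C)
  (star : A -> A) (S : A -> Prop) (t : A -> C) : Prop :=
  [/\ forall (a : C) x y, S x -> S y -> t (a *: x + y) = a * t x + t y,
      t 1 = 1,
      forall x y, S x -> S y -> t (x * y) = t (y * x),
      forall x, S x -> 0 <= t (star x * x)
    & forall x, S x -> t (star x * x) = 0 -> x = 0].

(* [cexp M tr n x y] : y = E_n(x), where E_n : M_n -> M_{n-1} is the
   trace-preserving conditional expectation, i.e. y ∈ M_{n-1} and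
   tr_n(y z) = tr_n(x z) for all z ∈ M_{n-1}. (Unique since tr is faithful.) *)
Definition cexp (C : numClosedFieldType) (A : algType C)
  (M : nat -> A -> Prop) (tr : nat -> A -> C) (n : nat) (x y : A) : Prop :=
  M n.-1 y /\ forall z, M n.-1 z -> tr n (y * z) = tr n (x * z).

(* Markov tower (M_n, tr_n, e_{n+1})_{n>=0} of modulus d; e is indexed from 1
   (the value e 0 is irrelevant). *)
Definition markov_tower (C : numClosedFieldType) (A : algType C)
  (star : A -> A) (M : nat -> A -> Prop) (tr : nat -> A -> C)
  (e : nat -> A) (d : C) : Prop :=
  0 < d /\ [/\
      forall n, fd_star_subalgebra star (M n) /\ faithful_tracial_state star (M n) (tr n),
      forall n x, M n x -> M n.+1 x /\ tr n.+1 x = tr n x,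
      forall n, (1 <= n)%N -> M n.+1 (e n)
    &
      [/\ forall i, (1 <= i)%N -> e i * e i = e i /\ star (e i) = e i,
          forall i j, (1 <= i)%N -> (i.+1 < j)%N -> e i * e j = e j * e i
        & forall i, (1 <= i)%N ->
            e i * e i.+1 * e i = (d ^+ 2)^-1 *: e i /\
            e i.+1 * e i * e i.+1 = (d ^+ 2)^-1 *: e i.+1]] /\
    [/\
      forall n, (1 <= n)%N -> forall x, M n x ->
        exists y, cexp M tr n x y /\ e n * x * e n = y * e n,
      forall n, (1 <= n)%N -> cexp M tr n.+1 (e n) ((d ^+ 2)^-1 %:A)
    &
      forall n, (1 <= n)%N ->
        (forall x, M n.+1 x -> exists y, M n y /\ x * e n = y * e n) /\
        (forall y, M n y -> exists x, M n.+1 x /\ y * e n = x * e n)].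

Definition fproj (C : numClosedFieldType) (A : algType C)
  (e : nat -> A) (d : C) (i l : nat) : A :=
  d ^+ (l * l.-1) *: \prod_(m < l) \prod_(t < l) e (i + l + m - t)%N.

Definition gproj (C : numClosedFieldType) (A : algType C)
  (e : nat -> A) (d : C) (j k n : nat) : A :=
  fproj e d (j + n.-1 * k) k.

(* Main.v *)
Require Import Defs.
From HB Require Import structures.
From mathcomp Require Import all_boot all_order all_algebra.
From mathcomp Require Import zify ring lra.
Set Implicit Arguments. Unset Strict Implicit. Unset Printing Implicit Defensive.
Import Order.TTheory GRing.Theory Num.Theory.
Local Open Scope ring_scope.
Section Tower.
Variables (C : numClosedFieldType) (A : algType C) (star : A -> A)
  (M : nat -> A -> Prop) (tr : nat -> A -> C) (e : nat -> A) (d : C).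
Hypothesis hstar : star_algebra star.
Hypothesis hmt : markov_tower star M tr e d.

Let lam : C := (d ^+ 2)^-1.

Lemma d_gt0 : 0 < d. Proof. by case: hmt. Qed.
Lemma d_neq0 : d != 0. Proof. by rewrite gt_eqF // d_gt0. Qed.
Lemma conj_d : d^* = d. Proof. by apply: conj_Creal; apply: gtr0_real; exact: d_gt0. Qed.

Lemma starK x : star (star x) = x. Proof. by case: hstar. Qed.
Lemma starD x y : star (x + y) = star x + star y. Proof. by case: hstar. Qed.
Lemma starZ (a : C) x : star (a *: x) = a^* *: star x. Proof. by case: hstar. Qed.
Lemma starM x y : star (x * y) = star y * star x. Proof. by case: hstar. Qed.
Lemma star0 : star 0 = 0.
Proof. by have := starZ 0 0; rewrite scale0r conjC0 scale0r. Qed.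
Lemma star1 : star 1 = 1.
Proof. have := starM (star 1) 1; rewrite mulr1 starK mulr1. by move=> <-. Qed.
Lemma starN x : star (- x) = - star x.
Proof. by rewrite -scaleN1r starZ rmorphN1 scaleN1r. Qed.
Lemma starB x y : star (x - y) = star x - star y.
Proof. by rewrite starD starN. Qed.
Lemma starZr (a : C) x : a \is Num.real -> star (a *: x) = a *: star x.
Proof. by move=> ha; rewrite starZ conj_Creal. Qed.

Lemma Mall n : fd_star_subalgebra star (M n) /\ faithful_tracial_state star (M n) (tr n).
Proof. by case: hmt => _ [[h _ _ _] _]; apply: h. Qed.
Lemma M1 n : M n 1. Proof. by case: (Mall n) => [[[h _ _ _ _] _] _]. Qed.
Lemma MD n x y : M n x -> M n y -> M n (x + y). Proof. by case: (Mall n) => [[[_ h _ _ _] _] _]; apply: h. Qed.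
Lemma MZ n (a : C) x : M n x -> M n (a *: x). Proof. by case: (Mall n) => [[[_ _ h _ _] _] _]; apply: h. Qed.
Lemma MM n x y : M n x -> M n y -> M n (x * y). Proof. by case: (Mall n) => [[[_ _ _ h _] _] _]; apply: h. Qed.
Lemma Mstar n x : M n x -> M n (star x). Proof. by case: (Mall n) => [[[_ _ _ _ h] _] _]; apply: h. Qed.
Lemma M0 n : M n 0. Proof. by rewrite -(scale0r 1); apply/MZ/M1. Qed.
Lemma MN n x : M n x -> M n (- x). Proof. by move=> h; rewrite -scaleN1r; apply: MZ. Qed.
Lemma MB n x y : M n x -> M n y -> M n (x - y). Proof. by move=> h1 h2; apply: MD => //; apply: MN. Qed.
Lemma Malg n (a : C) : M n (a%:A). Proof. by apply/MZ/M1. Qed.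

Lemma tr_lin n (a : C) x y : M n x -> M n y -> tr n (a *: x + y) = a * tr n x + tr n y.
Proof. by case: (Mall n) => _ [? ? ? ? ?]; auto. Qed.
Lemma tr1 n : tr n 1 = 1. Proof. by case: (Mall n) => _ [? ? ? ? ?]; auto. Qed.
Lemma tr_comm n x y : M n x -> M n y -> tr n (x * y) = tr n (y * x).
Proof. by case: (Mall n) => _ [? ? ? ? ?]; auto. Qed.
Lemma tr_faith n x : M n x -> tr n (star x * x) = 0 -> x = 0.
Proof. by case: (Mall n) => _ [? ? ? ? ?]; auto. Qed.
Lemma tr_pos n x : M n x -> 0 <= tr n (star x * x).
Proof. by case: (Mall n) => _ [? ? ? ? ?]; auto. Qed.
Lemma tr0 n : tr n 0 = 0.
Proof.
have := tr_lin 1 (M0 n) (M0 n); rewrite scale1r addr0 mul1r => h.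
by apply: (@addrI _ (tr n 0)); rewrite addr0 -h.
Qed.
Lemma trD n x y : M n x -> M n y -> tr n (x + y) = tr n x + tr n y.
Proof. by move=> hx hy; have := tr_lin 1 hx hy; rewrite scale1r mul1r. Qed.
Lemma trZ n (a : C) x : M n x -> tr n (a *: x) = a * tr n x.
Proof. by move=> hx; have := tr_lin a hx (M0 n); rewrite addr0 tr0 addr0. Qed.
Lemma trN n x : M n x -> tr n (- x) = - tr n x.
Proof. by move=> hx; rewrite -scaleN1r trZ // mulN1r. Qed.
Lemma trB n x y : M n x -> M n y -> tr n (x - y) = tr n x - tr n y.
Proof. by move=> hx hy; rewrite trD ?trN //; apply: MN. Qed.

Lemma Minc n x : M n x -> M n.+1 x.
Proof. by case: hmt => _ [[_ h _ _] _] hx; case: (h n x hx). Qed.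
Lemma tr_inc n x : M n x -> tr n.+1 x = tr n x.
Proof. by case: hmt => _ [[_ h _ _] _] hx; case: (h n x hx). Qed.
Lemma Mle n m x : (n <= m)%N -> M n x -> M m x.
Proof.
move=> /subnK <-; elim: (m - n)%N => [|i IH] hx; first by rewrite add0n.
by rewrite addSn; apply/Minc/IH.
Qed.
Lemma tr_le n m x : (n <= m)%N -> M n x -> tr m x = tr n x.
Proof.
move=> /subnK <-; elim: (m - n)%N => [|i IH] hx; first by rewrite add0n.
by rewrite addSn tr_inc ?IH //; apply: Mle hx; rewrite leq_addl.
Qed.
Lemma Me n : (1 <= n)%N -> M n.+1 (e n).
Proof. by case: hmt => _ [[_ _ h _] _]; apply: h. Qed.
Lemma Me_le n m : (1 <= n)%N -> (n < m)%N -> M m (e n).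
Proof. by move=> h1 h2; apply: (Mle h2); apply: Me. Qed.
Lemma e_idem i : (1 <= i)%N -> e i * e i = e i.
Proof. by case: hmt => _ [[_ _ _ [h _ _]] _] hi; case: (h i hi). Qed.
Lemma e_star i : (1 <= i)%N -> star (e i) = e i.
Proof. by case: hmt => _ [[_ _ _ [h _ _]] _] hi; case: (h i hi). Qed.
Lemma e_comm0 i j : (1 <= i)%N -> (i.+1 < j)%N -> e i * e j = e j * e i.
Proof. by case: hmt => _ [[_ _ _ [_ h _]] _]; apply: h. Qed.
Lemma e_comm i j : (1 <= i)%N -> (1 <= j)%N -> (i.+1 < j)%N || (j.+1 < i)%N ->
  e i * e j = e j * e i.
Proof. by move=> hi hj /orP [] h; [apply: e_comm0 | symmetry; apply: e_comm0]. Qed.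
Lemma e_tl1 i : (1 <= i)%N -> e i * e i.+1 * e i = lam *: e i.
Proof. by case: hmt => _ [[_ _ _ [_ _ h]] _] hi; case: (h i hi). Qed.
Lemma e_tl2 i : (1 <= i)%N -> e i.+1 * e i * e i.+1 = lam *: e i.+1.
Proof. by case: hmt => _ [[_ _ _ [_ _ h]] _] hi; case: (h i hi). Qed.
Lemma M2 n : (1 <= n)%N -> forall x, M n x ->
  exists y, cexp M tr n x y /\ e n * x * e n = y * e n.
Proof. by case: hmt => _ [_ [h _ _]]; apply: h. Qed.
Lemma M3 n : (1 <= n)%N -> cexp M tr n.+1 (e n) (lam %:A).
Proof. by case: hmt => _ [_ [_ h _]]; apply: h. Qed.
Lemma M4 n : (1 <= n)%N -> forall x, M n.+1 x -> exists y, M n y /\ x * e n = y * e n.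
Proof. by case: hmt => _ [_ [_ _ h]] hn x hx; case: (h n hn) => h1 _; apply: h1. Qed.


Lemma lam_real : lam \is Num.real.
Proof. by rewrite /lam; apply/gtr0_real; rewrite invr_gt0 exprn_gt0 // d_gt0. Qed.
Lemma dlam : d ^+ 2 * lam = 1.
Proof. by rewrite /lam mulfV // expf_neq0 // d_neq0. Qed.
Lemma dlamn n : d ^+ (2 * n) * lam ^+ n = 1.
Proof. by rewrite exprM -exprMn dlam expr1n. Qed.

Lemma Markov n z : (1 <= n)%N -> M n z -> tr n.+1 (e n * z) = lam * tr n z.
Proof.
move=> hn hz; case: (M3 hn) => _ h; rewrite -h //.
by rewrite mulr_algl trZ ?tr_inc //; apply: Minc.
Qed.

Lemma uniq_tr a b y1 y2 : (a <= b)%N -> M a y1 -> M a y2 ->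
  (forall z, M a z -> tr b (y1 * z) = tr b (y2 * z)) -> y1 = y2.
Proof.
move=> hab h1 h2 h.
have hw : M a (y1 - y2) by apply: MB.
have hs : M a (star (y1 - y2)) by apply: Mstar.
suff : star (y1 - y2) = 0.
  by move/(congr1 star); rewrite starK star0 => /eqP; rewrite subr_eq0 => /eqP.
apply: (tr_faith hs); rewrite starK mulrBl trB; try by apply: MM.
rewrite -(tr_le hab (MM h1 hs)) -(tr_le hab (MM h2 hs)) h //.
by rewrite subrr.
Qed.

Lemma e_commM m x : (1 <= m)%N -> M m.-1 x -> e m * x = x * e m.
Proof.
move=> hm hx.
have key : forall y, M m.-1 y -> e m * y * e m = y * e m.
  move=> y hy; case: (M2 hm (Mle (leq_pred m) hy)) => w [hc' ->].
  case: hc' => hw hc.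
  by congr (_ * _); apply: (uniq_tr (leq_pred m)).
have h1 := key x hx.
have h2 := key (star x) (Mstar hx).
have := congr1 star h2; rewrite !starM starK e_star // => h3.
by rewrite -h3 mulrA h1.
Qed.

Lemma e_commM' m x : (1 <= m)%N -> M m.-1 x -> GRing.comm (e m) x.
Proof. exact: e_commM. Qed.

Lemma e_comm2 i j : (1 <= i)%N -> (1 <= j)%N -> (i.+1 < j)%N || (j.+1 < i)%N ->
  GRing.comm (e i) (e j).
Proof. exact: e_comm. Qed.

Lemma commZ (y x : A) (a : C) : GRing.comm y x -> GRing.comm y (a *: x).
Proof. by rewrite /GRing.comm => h; rewrite -scalerAr -scalerAl h. Qed.
Lemma commC (y x : A) : GRing.comm y x -> GRing.comm x y.
Proof. by rewrite /GRing.comm. Qed.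

Lemma prod_mem n k (f : 'I_k -> A) : (forall i, M n (f i)) ->
  M n (\prod_(i < k) f i).
Proof.
move=> h; apply: (big_ind (M n)) => //; [exact: M1 | exact: MM].
Qed.

Lemma prod_comm y k (f : 'I_k -> A) : (forall i, GRing.comm y (f i)) ->
  GRing.comm y (\prod_(i < k) f i).
Proof. by move=> h; apply: commr_prod => i _; apply: h. Qed.

Lemma star_prod k (f : nat -> A) :
  star (\prod_(i < k) f i) = \prod_(i < k) star (f (k.-1 - i)%N).
Proof.
elim: k => [|k IH]; first by rewrite !big_ord0 star1.
rewrite big_ord_recr big_ord_recl /= starM IH subn0; congr (_ * _).
by apply: eq_bigr => i _; congr (star (f _)); rewrite /bump /=; lia.
Qed.

Lemma comm_star y w : GRing.comm (star y) w -> GRing.comm y (star w).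
Proof.
rewrite /GRing.comm => h; have := congr1 star h; rewrite !starM starK => ->.
by [].
Qed.

Lemma prod_extract n (c R : nat -> A) :
  (forall m m', (m' < m)%N -> (m < n)%N -> GRing.comm (c m) (R m')) ->
  \prod_(m < n) (c m * R m) = (\prod_(m < n) c m) * (\prod_(m < n) R m).
Proof.
elim: n => [|n IH] h; first by rewrite !big_ord0 mulr1.
rewrite !big_ord_recr /= IH; last by move=> m m' h1 h2; apply: h => //; apply: ltnW.
have hc : GRing.comm (c n) (\prod_(i < n) R i).
  by apply: prod_comm => i; apply: h.
by rewrite -!mulrA; congr (_ * _); rewrite !mulrA hc.
Qed.

Lemma collapse a n : (1 <= a)%N ->
  (\prod_(t < n.+1) e (a + n - t)%N) * (\prod_(t < n.+1) e (a + t)%N) = lam ^+ n *: e (a + n)%N.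
Proof.
move=> ha; elim: n => [|n IH].
  by rewrite !big_ord1 /= !addn0 subn0 e_idem // expr0 scale1r.
rewrite [X in _ * X]big_ord_recr big_ord_recl /=.
have -> : \prod_(i < n.+1) e (a + n.+1 - bump 0 i)%N = \prod_(t < n.+1) e (a + n - t)%N.
  by apply: eq_bigr => i _; congr (e _); rewrite /bump /=; lia.
rewrite subn0 -mulrA (mulrA _ _ (e _)) IH -scalerAl -scalerAr.
rewrite exprS mulrC -scalerA; congr (_ *: _).
by rewrite addnS mulrA e_tl2 //; apply: (leq_trans ha); rewrite leq_addr.
Qed.

Definition Fp p l := locked (fproj e d p l).
Definition Wd p l := \prod_(t < l) e (p + l + l - t)%N.
Definition Wa p l := \prod_(t < l) e (p + l + 1 + t)%N.

Lemma Fp_mem p l : M (p + l + l) (Fp p l).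
Proof.
rewrite /Fp -lock.
apply: MZ; apply: prod_mem => m; apply: prod_mem => t.
have := ltn_ord m; have := ltn_ord t.
move=> ht hm; apply: Me_le; lia.
Qed.

Lemma Fp_comm y p l : (forall m, (p < m)%N -> (m < p + l + l)%N -> GRing.comm y (e m)) ->
  GRing.comm y (Fp p l).
Proof.
rewrite /Fp -lock.
move=> h; apply: commZ; apply: prod_comm => m; apply: prod_comm => t.
have := ltn_ord m; have := ltn_ord t.
move=> ht hm; apply: h; lia.
Qed.

Lemma commM_e y m : (1 <= m)%N -> M m.-1 y -> GRing.comm y (e m).
Proof. by move=> h1 h2; apply: commC; apply: e_commM. Qed.

Lemma Fp_commM y p l : M p y -> GRing.comm y (Fp p l).
Proof.
move=> hy; apply: Fp_comm => m h1 h2; apply: commM_e; first lia.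
by apply: (Mle _ hy); lia.
Qed.

Lemma Wd_mem p l : M (p + l + l).+1 (Wd p l).
Proof. by apply: prod_mem => t; have := ltn_ord t => ht; apply: Me_le; lia. Qed.
Lemma Wa_mem p l : M (p + l + l).+1 (Wa p l).
Proof. by apply: prod_mem => t; have := ltn_ord t => ht; apply: Me_le; lia. Qed.

Lemma Wd_comm y p l : (forall m, (p + l < m)%N -> (m <= p + l + l)%N -> GRing.comm y (e m)) ->
  GRing.comm y (Wd p l).
Proof. by move=> h; apply: prod_comm => t; have := ltn_ord t => ht; apply: h; lia. Qed.
Lemma Wa_comm y p l : (forall m, (p + l < m)%N -> (m <= p + l + l)%N -> GRing.comm y (e m)) ->
  GRing.comm y (Wa p l).
Proof. by move=> h; apply: prod_comm => t; have := ltn_ord t => ht; apply: h; lia. Qed.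

Lemma Wd_star p l : star (Wd p l) = Wa p l.
Proof.
rewrite /Wd (star_prod l (fun t => e (p + l + l - t)%N)); apply: eq_bigr => i _.
have hi := ltn_ord i.
rewrite e_star; last lia.
congr (e _); lia.
Qed.
Lemma Wa_star p l : star (Wa p l) = Wd p l.
Proof. by rewrite -Wd_star starK. Qed.

Lemma WdWa p l : (1 <= l)%N -> Wd p l * Wa p l = lam ^+ l.-1 *: e (p + l + l)%N.
Proof.
case: l => // n _.
have := @collapse (p + n.+1 + 1) n; rewrite /Wd /Wa.
have -> : (p + n.+1 + 1 + n = p + n.+1 + n.+1)%N by lia.
move=> <-; last lia.
congr (_ * _); apply: eq_bigr => i _; congr (e _); lia.
Qed.

Lemma R1 p l : Fp p l.+1 = d ^+ (2 * l) *: (Wa p l * e (p + l + l).+1 * Fp p l * Wd p l).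
Proof.
rewrite /Fp -!lock /fproj.
have -> : \prod_(m < l.+1) \prod_(t < l.+1) e (p + l.+1 + m - t)%N =
    \prod_(m < l.+1) (e (p + l + 1 + m)%N * \prod_(t < l) e (p + l + m - t)%N).
  apply: eq_bigr => m _; rewrite big_ord_recl; congr (_ * _); first by congr (e _); rewrite /=; lia.
  by apply: eq_bigr => t _; congr (e _); rewrite /= /bump leq0n add1n; lia.
rewrite (@prod_extract _ (fun m => e (p + l + 1 + m)%N) (fun m => \prod_(t < l) e (p + l + m - t)%N)); last first.
  by move=> m m' h1 h2; apply: prod_comm => t; have := ltn_ord t => ht; apply: e_comm2; try lia; apply/orP; right; lia.
rewrite [X in X * _]big_ord_recr [X in _ * X]big_ord_recr /=.
rewrite -scalerAr -scalerAl scalerA -exprD; congr (_ *: _).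
  by congr (_ ^+ _); case: l => //= n; nia.
have -> : (p + l + 1 + l = (p + l + l).+1)%N by lia.
by rewrite /Wa /Wd !mulrA.
Qed.

Ltac pull := repeat (rewrite -scalerAl || rewrite -scalerAr); rewrite ?scalerA.

Lemma swapr (x y z : A) : GRing.comm x y -> x * (y * z) = y * (x * z).
Proof. by move=> h; rewrite !mulrA h. Qed.

Lemma Fp1 p : Fp p 1 = e p.+1.
Proof. by rewrite /Fp -lock /fproj !big_ord1 /= expr0 scale1r addn0 subn0 addn1. Qed.

Lemma Wa1 p : Wa p 1 = e p.+2.
Proof. by rewrite /Wa big_ord1 /=; congr (e _); lia. Qed.
Lemma Wd1 p : Wd p 1 = e p.+2.
Proof. by rewrite /Wd big_ord1 /=; congr (e _); lia. Qed.

Lemma Wa_split p l : Wa p l.+1 = Wa p.+1 l * e (p + l + l).+2.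
Proof.
rewrite /Wa big_ord_recr /=; congr (_ * _); last by congr (e _); lia.
by apply: eq_bigr => i _; congr (e _); rewrite /=; lia.
Qed.
Lemma Wd_split p l : Wd p l.+1 = e (p + l + l).+2 * Wd p.+1 l.
Proof.
rewrite /Wd big_ord_recl /=; congr (_ * _); first by congr (e _); lia.
by apply: eq_bigr => i _; congr (e _); rewrite /= /bump leq0n add1n; lia.
Qed.

Lemma scal_d2 n (x : A) : d ^+ (2 * n.+1) *: x = d ^+ (2 * n) *: (d ^+ 2 *: x).
Proof. by rewrite scalerA -exprD; congr (_ ^+ _ *: _); lia. Qed.

Lemma R3 p l : (1 <= l)%N -> Fp p.+1 l = d ^+ (2 * l) *: (Wa p l * Fp p l * Wd p l).
Proof.
elim: l p => // l IH p _.
case: (posnP l) => [-> | hl].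
  rewrite !Fp1 Wa1 Wd1 e_tl2 // scalerA mulnC /= expr2 -/(d ^+ 2).
  by rewrite -expr2 dlam scale1r.
rewrite R1 IH // Wa_split Wd_split R1.
have -> : (p.+1 + l + l).+1 = (p + l + l).+2 by lia.
set a := Wa p.+1 l; set b := Wd p.+1 l; set X := Wa p l; set F := Fp p l; set Y := Wd p l.
set E1 := e (p + l + l).+1; set E2 := e (p + l + l).+2.
have cXE2 : GRing.comm X E2.
  by apply: commC; apply: Wa_comm => m h1 h2; apply: e_comm2; try lia; apply/orP; right; lia.
have cYE2 : GRing.comm Y E2.
  by apply: commC; apply: Wd_comm => m h1 h2; apply: e_comm2; try lia; apply/orP; right; lia.
have cFE2 : GRing.comm F E2.
  by apply: commC; apply: Fp_comm => m h1 h2; apply: e_comm2; try lia; apply/orP; right; lia.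
have key : a * E2 * X * E1 * F * Y * E2 * b = lam *: (a * E2 * X * F * Y * b).
  rewrite -!mulrA (swapr _ cYE2) (swapr _ cFE2) (swapr _ (commC cXE2)) (mulrA E2) (mulrA _ E2).
  rewrite /E1 /E2 e_tl2; last lia.
  by rewrite -/E2; pull; rewrite -(swapr _ (commC cXE2)) !mulrA.
pull; rewrite !mulrA key; pull.
by congr (_ *: _); rewrite mulnS exprD -[LHS]mulr1 -dlam; ring.
Qed.

Lemma mulr_pair (x y w z : A) : x * y = w -> x * (y * z) = w * z.
Proof. by move=> <-; rewrite mulrA. Qed.
Lemma mulr_trip (x y u w z : A) : x * y * u = w -> x * (y * (u * z)) = w * z.
Proof. by move=> <-; rewrite !mulrA. Qed.
Lemma lamS l : (1 <= l)%N -> lam ^+ l.-1 * lam = lam ^+ l.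
Proof. by case: l => // n _; rewrite exprSr. Qed.

Definition JP p l : Prop :=
  [/\ Fp p l * Fp p l = Fp p l /\ star (Fp p l) = Fp p l,
      (forall x, M (p + l) x -> exists y, M p y /\
         (forall z, M p z -> tr (p + l) (y * z) = tr (p + l) (x * z)) /\
         Fp p l * x * Fp p l = y * Fp p l),
      (forall z, M (p + l) z -> tr (p + l + l) (Fp p l * z) = lam ^+ l * tr (p + l) z),
      (forall x, M (p + l + l) x -> exists y, M (p + l) y /\ x * Fp p l = y * Fp p l)
    & Fp p l * e (p + l + l) * Fp p l = lam *: Fp p l].

Lemma JP_base p : JP p 1.
Proof.
rewrite /JP Fp1 !addn1; split.
- by rewrite e_idem // e_star.
- move=> x hx; case: (M2 (ltn0Sn p) hx) => y [[hy hc] he].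
  by exists y.
- by move=> z hz; rewrite Markov // expr1.
- by move=> x hx; apply: M4.
- by rewrite e_tl1.
Qed.

Lemma step_idem p l : (1 <= l)%N -> JP p l -> Fp p l.+1 * Fp p l.+1 = Fp p l.+1.
Proof.
move=> hl [[FF Fst] Fb Fc Fd F5].
rewrite !R1; pull.
set F := Fp p l; set X := Wa p l; set Y := Wd p l.
set E0 := e (p + l + l); set E1 := e (p + l + l).+1.
have cE1F : GRing.comm E1 F.
  by apply: Fp_comm => m h1 h2; apply: e_comm2; try lia; apply/orP; right; lia.
have YX : Y * X = lam ^+ l.-1 *: E0 by apply: WdWa.
have T2 : E1 * E0 * E1 = lam *: E1 by rewrite /E1 /E0 e_tl2 //; lia.
rewrite -!mulrA (mulr_pair _ YX); pull.
rewrite [E1 * (F * (E0 * _))](swapr _ cE1F) (mulr_trip _ T2); pull.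
rewrite (swapr _ cE1F) (mulr_pair _ FF) -(swapr _ cE1F).
congr (_ *: _); by rewrite -mulrA lamS // -mulrA dlamn mulr1.
Qed.

Lemma lam_neq0 : lam != 0.
Proof. by rewrite /lam invr_eq0 expf_neq0 // d_neq0. Qed.
Lemma lamX_neq0 n : lam ^+ n != 0.
Proof. by rewrite expf_neq0 // lam_neq0. Qed.
Lemma DE l : (1 <= l)%N -> d ^+ (2 * l) = (lam ^+ l.-1 * lam)^-1.
Proof.
move=> hl; rewrite lamS //; apply: (mulIf (lamX_neq0 l)).
by rewrite dlamn mulVf // lamX_neq0.
Qed.
Lemma d2l_real l : d ^+ (2 * l) \is Num.real.
Proof. by apply: rpredX; apply: gtr0_real; exact: d_gt0. Qed.

Ltac scal hl := rewrite (DE hl) ?exprS -?(lamS hl); field; rewrite ?lam_neq0 ?lamX_neq0 //.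

Lemma step_star p l : (1 <= l)%N -> JP p l -> star (Fp p l.+1) = Fp p l.+1.
Proof.
move=> hl [[FF Fst] Fb Fc Fd F5].
have cE1F : GRing.comm (e (p + l + l).+1) (Fp p l).
  by apply: Fp_comm => m h1 h2; apply: e_comm2; try lia; apply/orP; right; lia.
rewrite !R1 starZr ?d2l_real // !starM Fst Wd_star Wa_star e_star //.
by rewrite -!mulrA (swapr _ (commC cE1F)).
Qed.

Lemma step_e p l : (1 <= l)%N -> JP p l ->
  Fp p l.+1 * e (p + l.+1 + l.+1) * Fp p l.+1 = lam *: Fp p l.+1.
Proof.
move=> hl [[FF Fst] Fb Fc Fd F5].
have -> : (p + l.+1 + l.+1 = (p + l + l).+2)%N by lia.
rewrite !R1; pull.
set F := Fp p l; set X := Wa p l; set Y := Wd p l.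
set E0 := e (p + l + l); set E1 := e (p + l + l).+1; set E2 := e (p + l + l).+2.
have cE1F : GRing.comm E1 F.
  by apply: Fp_comm => m h1 h2; apply: e_comm2; try lia; apply/orP; right; lia.
have cYE2 : GRing.comm Y E2.
  by apply: commC; apply: Wd_comm => m h1 h2; apply: e_comm2; try lia; apply/orP; right; lia.
have cFE2 : GRing.comm F E2.
  by apply: commC; apply: Fp_comm => m h1 h2; apply: e_comm2; try lia; apply/orP; right; lia.
have YX : Y * X = lam ^+ l.-1 *: E0 by apply: WdWa.
have T1 : E1 * E2 * E1 = lam *: E1 by rewrite /E1 /E2 e_tl1 //; lia.
rewrite -!mulrA (swapr _ cYE2) (swapr _ cFE2) (mulr_pair _ YX); pull.
rewrite [E1 * (F * Y)](swapr _ cE1F) (mulr_trip _ F5); pull.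
rewrite (swapr _ (commC cFE2)) [E1 * (F * _)](swapr _ cE1F) (mulr_trip _ T1); pull.
rewrite -(swapr _ cE1F); congr (_ *: _).
scal hl.
Qed.

Lemma commM_e_le y m n : (1 <= m)%N -> (n < m)%N -> M n y -> GRing.comm y (e m).
Proof. by move=> h1 h2 hy; apply: commM_e => //; apply: (Mle _ hy); lia. Qed.

Lemma WdxWa p l x y0 : (1 <= l)%N -> M (p + l).+1 x -> M (p + l) y0 ->
  e (p + l).+1 * x * e (p + l).+1 = y0 * e (p + l).+1 ->
  Wd p l * x * Wa p l = y0 * (Wd p l * Wa p l).
Proof.
case: l => // n _ hx hy0 he.
set W1 := \prod_(t < n) e (p + n.+1 + n.+1 - t)%N.
have hWd : Wd p n.+1 = W1 * e (p + n.+1).+1.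
  rewrite /Wd big_ord_recr /=; congr (_ * e _); lia.
have hWa : Wa p n.+1 = e (p + n.+1).+1 * star W1.
  by rewrite -Wd_star hWd starM e_star.
have cyW : GRing.comm y0 W1.
  apply: prod_comm => t; have := ltn_ord t => ht.
  apply: (commM_e_le _ _ hy0); lia.
rewrite hWd hWa -!mulrA (mulr_trip _ he) -mulrA (swapr _ (commC cyW)).
by rewrite (mulr_pair _ (e_idem _)).
Qed.

Lemma step_b p l : (1 <= l)%N -> JP p l ->
  forall x, M (p + l.+1) x -> exists y, M p y /\
    (forall z, M p z -> tr (p + l.+1) (y * z) = tr (p + l.+1) (x * z)) /\
    Fp p l.+1 * x * Fp p l.+1 = y * Fp p l.+1.
Proof.
move=> hl [[FF Fst] Fb Fc Fd F5] x.
rewrite addnS => hx.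
case: (M2 (ltn0Sn (p + l)) hx) => y0 [[hy0 hc0] he0].
case: (Fb y0 hy0) => z0 [hz0 [hc1 he1]].
exists z0; split => //; split.
  move=> w hw.
  have hw' : M (p + l) w by apply: (Mle _ hw); lia.
  rewrite tr_inc; last by apply: MM => //; apply: (Mle _ hz0); lia.
  by rewrite hc1 // -tr_inc ?hc0 //; apply: MM.
have YxX := WdxWa hl hx hy0 he0.
rewrite WdWa // -scalerAr in YxX.
rewrite !R1; pull.
set F := Fp p l; set X := Wa p l; set Y := Wd p l.
set E0 := e (p + l + l); set E1 := e (p + l + l).+1.
have cE1F : GRing.comm E1 F.
  by apply: Fp_comm => m h1 h2; apply: e_comm2; try lia; apply/orP; right; lia.
have cE1y : GRing.comm E1 y0 by apply: commC; apply: (commM_e_le _ _ hy0); lia.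
have cXz : GRing.comm X z0.
  by apply: commC; apply: Wa_comm => m h1 h2; apply: (commM_e_le _ _ hz0); lia.
have T2 : E1 * E0 * E1 = lam *: E1 by rewrite /E1 /E0 e_tl2 //; lia.
rewrite -!mulrA (mulr_trip _ YxX); pull; rewrite -!mulrA.
rewrite [E1 * (F * (y0 * _))](swapr _ cE1F) (swapr _ cE1y) -/E0 (mulr_trip _ T2); pull.
rewrite (swapr _ cE1F) (mulr_trip _ he1) -!mulrA (swapr _ cXz) -(swapr _ cE1F).
congr (_ *: _); scal hl.
Qed.

Ltac leaf := first [ by apply: (Mle _ (Fp_mem _ _)); lia | by apply: (Mle _ (Wa_mem _ _)); lia
  | by apply: (Mle _ (Wd_mem _ _)); lia | by apply: Me_le; lia | by apply: Malg | by apply: M1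
  | by match goal with H : M ?n ?x |- M _ ?x => apply: (Mle _ H); lia end ].
Ltac mem := repeat first [apply: MM | apply: MZ | apply: MB | apply: MD | apply: Mstar]; leaf.

Lemma step_c p l : (1 <= l)%N -> JP p l ->
  forall z, M (p + l.+1) z ->
  tr (p + l.+1 + l.+1) (Fp p l.+1 * z) = lam ^+ l.+1 * tr (p + l.+1) z.
Proof.
move=> hl [[FF Fst] Fb Fc Fd F5] z.
have -> : (p + l.+1 + l.+1 = (p + l + l).+2)%N by lia.
rewrite addnS => hz.
case: (M2 (ltn0Sn (p + l)) hz) => y0 [[hy0 hc0] he0].
have YzX := WdxWa hl hz hy0 he0.
rewrite WdWa // -scalerAr in YzX.
rewrite R1 -scalerAl trZ; last by mem.
set F := Fp p l; set X := Wa p l; set Y := Wd p l.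
set E0 := e (p + l + l); set E1 := e (p + l + l).+1.
rewrite -!mulrA tr_comm; try by mem.
rewrite -!mulrA (mulrA Y) YzX; pull.
rewrite trZ; last by mem.
rewrite /E1 Markov; [|lia|by mem].
rewrite (mulrA F) tr_comm; try by mem.
rewrite Markov; [|lia|by mem].
rewrite Fc //.
have -> : tr (p + l) y0 = tr (p + l).+1 z.
  by rewrite -tr_inc // -(mulr1 y0) -(mulr1 z) hc0 //; apply: M1.
scal hl.
Qed.

Lemma step_d p l : (1 <= l)%N -> JP p l -> JP p.+1 l ->
  forall x, M (p + l.+1 + l.+1) x -> exists y, M (p + l.+1) y /\
    x * Fp p l.+1 = y * Fp p l.+1.
Proof.
move=> hl JPl JPG.
have P2 := step_idem hl JPl; have Pst := step_star hl JPl; have Pc := step_c hl JPl.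
case: JPl => [[FF Fst] Fb Fc Fd F5].
case: JPG => [[GG Gst] Gb Gc Gd G5].
rewrite !addnS !addSn in Pc *.
rewrite !addSn in Gc Gd.
move=> x hx.
set P := Fp p l.+1.
set F := Fp p l; set X := Wa p l; set Y := Wd p l; set G := Fp p.+1 l.
set E0 := e (p + l + l); set E1 := e (p + l + l).+1.
have hP : M (p + l + l).+2 P by apply: (Mle _ (Fp_mem _ _)); lia.
have cE1F : GRing.comm E1 F.
  by apply: Fp_comm => m h1 h2; apply: e_comm2; try lia; apply/orP; right; lia.
have YX : Y * X = lam ^+ l.-1 *: E0 by apply: WdWa.
have E1FE1 : E1 * F * E1 = F * E1 by rewrite cE1F -mulrA /E1 e_idem //; lia.
have hP' : P = d ^+ (2 * l) *: (X * E1 * F * Y) by rewrite /P R1.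
case: (M4 (n := (p + l + l).+1) (ltn0Sn _) (x := x * X)); first by mem.
move=> y1 [hy1 hxy1].
have xP : x * P = d ^+ (2 * l) *: (y1 * E1 * F * Y).
  by rewrite hP'; pull; rewrite !mulrA hxy1.
set s := y1 * F * Y.
have hs : M (p + l + l).+1 s by mem.
have sG : s * G = s.
  rewrite /G R3 // /s; pull; rewrite -!mulrA (mulr_pair _ YX); pull.
  rewrite (mulr_trip _ F5); pull; rewrite -!mulrA.
  by rewrite -[RHS]scale1r; congr (_ *: _); scal hl.
case: (Gd s hs) => t [ht hst]; rewrite sG in hst.
set sy1 := star y1; set st := star t.
have hsy1 : M (p + l + l).+1 sy1 by apply: Mstar.
have hst' : M (p + l).+1 st by apply: Mstar.
set T := tr (p + l).+1 (st * t).
have hG : M (p + l + l).+1 G by apply: (Mle _ (Fp_mem _ _)); lia.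
have hF : M (p + l + l) F by apply: (Mle _ (Fp_mem _ _)); lia.
have tGst : tr (p + l + l).+1 (t * G * st) = lam ^+ l * T.
  rewrite (@tr_comm _ (t * G) st); try by mem.
  rewrite mulrA (@tr_comm _ (st * t) G); try by mem.
  by rewrite Gc //; mem.
have stars : star s = X * F * sy1 by rewrite /s !starM Fst Wd_star mulrA.
have y1F : tr (p + l + l).+1 (y1 * F * sy1) = T.
  have e1 : s * star s = lam ^+ l *: (y1 * F * sy1).
    rewrite stars /s -!mulrA (mulr_pair _ YX); pull; rewrite -?mulrA (mulr_trip _ F5); pull.
    by rewrite !mulrA -(lamS hl).
  have e2 : s * star s = t * G * st by rewrite hst starM Gst -mulrA (mulrA G) GG mulrA.
  apply: (mulfI (lamX_neq0 l)); rewrite -tGst -e2 e1 trZ //; mem.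
have hkr : d ^+ (2 * l) \is Num.real by apply: d2l_real.
set r2 := (p + l + l).+2.
have hE1 : M r2 E1 by mem.
have starxP : star (x * P) = (d ^+ (2 * l)) *: (X * F * E1 * sy1).
  rewrite xP starZr // !starM Fst Wd_star e_star; last lia.
  by rewrite !mulrA.
have starP z : star (z * P) = P * star z by rewrite starM Pst.
have A1 : tr r2 (x * P * star (x * P)) = (d ^+ (2 * l)) * (d ^+ (2 * l)) * lam ^+ l * lam * T.
  rewrite starxP xP; pull.
  rewrite -!mulrA (mulr_pair _ YX); pull; rewrite -?mulrA (mulr_trip _ F5); pull.
  rewrite -?mulrA (mulr_trip _ E1FE1) -?mulrA trZ; last by mem.
  rewrite !mulrA (@tr_comm _ (y1 * F * E1) sy1); try by mem.
  rewrite !mulrA (@tr_comm _ (sy1 * y1 * F) E1); try by mem.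
  rewrite /E1 Markov; [|lia|by mem].
  rewrite -(mulrA sy1) (@tr_comm _ sy1 (y1 * F)); try by mem.
  by rewrite y1F -(lamS hl) /T; ring.
have A2 : tr r2 (x * P * star (t * P)) = (d ^+ (2 * l)) * lam * lam ^+ l * T.
  rewrite starP mulrA -(mulrA x) P2 xP; pull; rewrite trZ; last by mem.
  rewrite -!mulrA (@tr_comm _ y1); try by mem.
  rewrite -!mulrA /E1 Markov; [|lia|by mem].
  rewrite (mulrA F) (@tr_comm _ (F * Y)); try by mem.
  have -> : st * y1 * (F * Y) = st * (t * G) by rewrite -hst /s !mulrA.
  rewrite (mulrA st) (@tr_comm _ (st * t) G); try by mem.
  by rewrite Gc; last by mem.
have PXFE1 z : P * (X * (F * (E1 * z))) = X * (F * (E1 * z)).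
  rewrite hP'; pull; rewrite -!mulrA (mulr_pair _ YX); pull.
  rewrite -?mulrA (mulr_trip _ F5); pull; rewrite -?mulrA (mulr_trip _ E1FE1) -?mulrA.
  by rewrite -[RHS]scale1r; congr (_ *: _); scal hl.
have A3 : tr r2 (t * P * star (x * P)) = (d ^+ (2 * l)) * lam * lam ^+ l * T.
  rewrite starxP; pull; rewrite trZ; last by mem.
  rewrite -!mulrA PXFE1 !mulrA (@tr_comm _ (t * X * F * E1) sy1); try by mem.
  rewrite !mulrA (@tr_comm _ (sy1 * t * X * F) E1); try by mem.
  rewrite /E1 Markov; [|lia|by mem].
  rewrite -!mulrA (@tr_comm _ sy1); try by mem.
  have -> : t * (X * F) * sy1 = t * star s by rewrite stars !mulrA.
  rewrite hst starM Gst -/G -/st (mulrA t) tGst /T; ring.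
have A4 : tr r2 (t * P * star (t * P)) = lam ^+ l.+1 * T.
  rewrite starP mulrA -(mulrA t) P2 (@tr_comm _ (t * P) st); try by mem.
  by rewrite mulrA (@tr_comm _ (st * t) P); [rewrite Pc //; mem | mem | mem].
exists ((d ^+ (2 * l)) *: t); split; first by mem.
rewrite -scalerAl; apply/eqP; rewrite -subr_eq0; apply/eqP.
set Z := x * P - (d ^+ (2 * l)) *: (t * P).
have hZ : M r2 Z by rewrite /Z; mem.
suff : star Z = 0 by move/(congr1 star); rewrite starK star0.
apply: (tr_faith (Mstar hZ)); rewrite starK.
rewrite /Z starB starZr // mulrBl !mulrBr -!scalerAl -!scalerAr.
rewrite !trB ?trZ; try by mem.
rewrite A1 A2 A3 A4 exprSr /T; ring.
Qed.

Lemma JP_all l : (1 <= l)%N -> forall p, JP p l.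
Proof.
elim: l => // l IH _ p.
case: (posnP l) => [-> | hl]; first exact: JP_base.
have J1 := IH hl p; have J2 := IH hl p.+1.
split.
- by split; [apply: step_idem | apply: step_star].
- exact: step_b.
- exact: step_c.
- exact: step_d.
- exact: step_e.
Qed.

Lemma TL1 p l : (1 <= l)%N -> Fp (p + l) l * Fp p l * Fp (p + l) l = lam ^+ l *: Fp (p + l) l.
Proof.
move=> hl; case: (JP_all hl p) => _ _ Fc _ _.
case: (JP_all hl (p + l)) => _ Sb _ _ _.
case: (Sb (Fp p l) (Fp_mem _ _)) => y [hy [hc ->]].
rewrite -mulr_algl; congr (_ * _).
apply: (uniq_tr (leq_addr l (p + l))) => // [|z hz]; first by apply: Malg.
rewrite hc // Fc // mulr_algl trZ; last by apply: (Mle _ hz); lia.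
by rewrite (tr_le _ hz) //; lia.
Qed.

Lemma TL2 p l : (1 <= l)%N -> Fp p l * Fp (p + l) l * Fp p l = lam ^+ l *: Fp p l.
Proof.
move=> hl; case: (JP_all hl p) => [[FF Fst] _ Fc _ _].
case: (JP_all hl (p + l)) => [[SS Sst] _ Sc _ _].
have T1 := TL1 p hl.
set F := Fp p l; set S := Fp (p + l) l; set c := lam ^+ l.
set r := (p + l + l + l)%N.
have hF : M r F by apply: (Mle _ (Fp_mem _ _)); lia.
have hS : M r S by apply: Fp_mem.
have hcr : c \is Num.real by apply: rpredX; exact: lam_real.
set X := F * S * F - c *: F.
have hX : M r X by rewrite /X; mem.
have Xst : star X = X by rewrite /X starB starZr // !starM Fst Sst mulrA.
have XX : X * X = - c *: X.
  rewrite /X mulrBl !mulrBr -!scalerAl -!scalerAr.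
  have -> : F * S * F * (F * S * F) = F * (S * F * S) * F.
    by rewrite -!mulrA (mulrA F F) FF.
  rewrite T1 -scalerAr -scalerAl !mulrA FF -(mulrA F S F) -!mulrA FF !mulrA.
  by rewrite -/c -/F subrr sub0r scaleNr scalerBr.
have trX : tr r X = 0.
  rewrite /X trB; try by mem.
  rewrite trZ // -(mulrA F) (@tr_comm _ F (S * F)); [|by []|by apply: MM].
  rewrite -mulrA FF Sc; last by apply: Fp_mem.
  by rewrite (tr_le _ (Fp_mem _ _)) ?subrr //; lia.
suff : X = 0 by move/eqP; rewrite subr_eq0 => /eqP.
apply: (tr_faith hX); rewrite Xst XX trZ // trX mulr0 //.
Qed.

Lemma gprojE j k m : gproj e d j k m.+1 = Fp (j + m * k) k.
Proof. by rewrite /gproj /Fp -lock. Qed.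

Lemma lamk k : ((d ^+ k) ^+ 2)^-1 = lam ^+ k.
Proof. by rewrite /lam exprVn -!exprM mulnC. Qed.

Lemma main_sec j k : (1 <= k)%N ->
  markov_tower star (fun n => M (j + n * k)%N) (fun n => tr (j + n * k)%N)
    (gproj e d j k) (d ^+ k).
Proof.
move=> hk.
have JPk := JP_all hk.
have I1 m : (j + m.+1 * k = j + m * k + k)%N by lia.
have I2 m : (j + m.+2 * k = j + m * k + k + k)%N by lia.
split; first by apply: exprn_gt0; exact: d_gt0.
split; split.
- by move=> n; apply: Mall.
- move=> n x hx; have hle : (j + n * k <= j + n.+1 * k)%N by lia.
  by split; [apply: (Mle hle hx) | apply: tr_le].
- by case=> // m _; rewrite gprojE I2; apply: Fp_mem.
- split.
  + by case=> // m _; rewrite gprojE; case: (JPk (j + m * k)) => [[]].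
  + case=> // m [//|m'] _ hmm; rewrite !gprojE.
    apply: Fp_commM; apply: (Mle _ (Fp_mem _ _)).
    have : (m.+2 * k <= m' * k)%N by rewrite leq_mul2r; apply/orP; right; lia.
    lia.
  + case=> // m _; rewrite !gprojE lamk (I1 m).
    by rewrite TL1 // TL2.
- case=> // m _ x; rewrite /cexp /= gprojE I1 => hx.
  case: (JPk (j + m * k)) => _ Fb _ _ _.
  by case: (Fb x hx) => y [hy [hc he]]; exists y.
- case=> // m _; rewrite /cexp /= gprojE I2 I1 lamk; split; first by apply: Malg.
  case: (JPk (j + m * k)) => _ _ Fc _ _.
  move=> z hz; rewrite Fc // mulr_algl trZ; last by apply: (Mle _ hz); lia.
  by rewrite (tr_le _ hz) //; lia.
- case=> // m _; rewrite gprojE I2 I1.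
  case: (JPk (j + m * k)) => _ _ _ Fd _.
  split; first exact: Fd.
  by move=> y hy; exists y; split => //; apply: (Mle _ hy); lia.
Qed.

End Tower.

Theorem mainTheorem8 (C : numClosedFieldType) (A : algType C)
  (star : A -> A) (M : nat -> A -> Prop) (tr : nat -> A -> C)
  (e : nat -> A) (d : C) (j k : nat) :
  (1 <= k)%N ->
  star_algebra star ->
  markov_tower star M tr e d ->
  markov_tower star (fun n => M (j + n * k)%N) (fun n => tr (j + n * k)%N)
    (gproj e d j k) (d ^+ k).
Proof. by move=> hk hs hm; apply: main_sec. Qed.
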